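(* A presheaf $X$ of sets on $\mathscr{V}_f$ is finite if and only if $|X(0)|<\infty$ and, for each $x\in X(0)$, there exist a constant-free finite functor $F_x\in\mathscr{F}$ and a monomorphism of presheaves $X_x\hookrightarrow F_x$.
   Context: $p$ prime, $\mathbb{F}=\mathbb{F}_p$, $\mathscr{V}_f$ finite-dimensional $\mathbb{F}$-vector spaces; presheaves are contravariant functors $\mathscr{V}_f\to$ Sets. $\mathscr{F}$ is the abelian category of functors $\mathscr{V}_f^{\mathrm{op}}\to$ ($\mathbb{F}$-vector spaces), regarded as presheaves of sets by forgetting structure; $F\in\mathscr{F}$ is finite if it has a finite composition series and constant-free if $F(0)=0$. A presheaf $X$ is finite if there is a monomorphism $X\hookrightarrow F_X$ with $F_X\in\mathscr{F}$ finite. For $x\in X(0)$, $X_x\subset X$ is the subpresheaf with $X_x(V)$ the fibre over $x$ of the map $X(V)\to X(0)$ induced by $0\hookrightarrow V$. *)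

(* Defs.v *)
From HB Require Import structures.
From mathcomp Require Import all_boot all_algebra.
From Stdlib Require Import ProofIrrelevance.
Set Implicit Arguments. Unset Strict Implicit.
Import GRing.Theory.
Local Open Scope ring_scope.

(* Skeleton of V_f : objects are naturals n (standing for F^n = 'rV['F_p]_n),
   a morphism n -> m is a matrix A : 'M['F_p]_(n,m), acting v |-> v *m A.
   Identity is 1%:M and the composite g o f (f : n -> m, g : m -> k) is f *m g. *)

Section Presheaves.
Variable q : nat.
Local Notation K := 'F_q.

Record presheaf := Presheaf {
  ps_obj :> nat -> Type;
  ps_map : forall n m, 'M[K]_(n, m) -> ps_obj m -> ps_obj n;
  ps_id : forall n (x : ps_obj n), ps_map 1%:M x = x;
  ps_comp : forall n m k (f : 'M[K]_(n, m)) (g : 'M[K]_(m, k)) (x : ps_obj k),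
      ps_map (f *m g) x = ps_map f (ps_map g x) }.


Arguments ps_map : clear implicits.
Arguments ps_map p {n m} f x.

Record vfunctor := VFunctor {
  vf_obj : nat -> lmodType K;
  vf_map : forall n m, 'M[K]_(n, m) -> {linear vf_obj m -> vf_obj n};
  vf_id : forall n (x : vf_obj n), vf_map 1%:M x = x;
  vf_comp : forall n m k (f : 'M[K]_(n, m)) (g : 'M[K]_(m, k)) (x : vf_obj k),
      vf_map (f *m g) x = vf_map f (vf_map g x) }.


Arguments vf_map : clear implicits.
Arguments vf_map v {n m}.

Definition forget (G : vfunctor) : presheaf :=
  @Presheaf (fun n => (vf_obj G n : Type)) (fun n m f x => vf_map G f x)
    (@vf_id G) (@vf_comp G).

Definition is_mono (X Y : presheaf) : Prop :=
  exists a : forall n, X n -> Y n,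
    (forall n m (f : 'M[K]_(n, m)) (x : X m), a n (ps_map X f x) = ps_map Y f (a m x))
    /\ (forall n, injective (a n)).

Definition is_subfunctor (G : vfunctor) (S : forall n, vf_obj G n -> Prop) : Prop :=
  [/\ (forall n, S n 0),
      (forall n u v, S n u -> S n v -> S n (u + v)),
      (forall n (c : K) u, S n u -> S n (c *: u)) &
      (forall n m (f : 'M[K]_(n, m)) u, S m u -> S n (vf_map G f u))].

Definition sub_le (G : vfunctor) (S T : forall n, vf_obj G n -> Prop) : Prop :=
  forall n u, S n u -> T n u.

(* F is finite: it has a finite composition series
   0 = S_0 < S_1 < ... < S_k = F with each S_{i+1}/S_i simple, i.e.
   S_i is properly contained in S_{i+1} and no subfunctor lies strictly between. *)
Definition finite_functor (G : vfunctor) : Prop :=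
  exists (k : nat) (S : nat -> forall n, vf_obj G n -> Prop),
    [/\ (forall i, (i <= k)%N -> is_subfunctor (S i)),
        (forall n u, S 0%N n u <-> u = 0),
        (forall n u, S k n u) &
        (forall i, (i < k)%N ->
           [/\ sub_le (S i) (S i.+1),
               ~ sub_le (S i.+1) (S i) &
               forall T, is_subfunctor T -> sub_le (S i) T -> sub_le T (S i.+1) ->
                 sub_le T (S i) \/ sub_le (S i.+1) T])].

Definition constant_free (G : vfunctor) : Prop := forall u : vf_obj G 0, u = 0.

Definition finite_presheaf (X : presheaf) : Prop :=
  exists G : vfunctor, finite_functor G /\ is_mono X (forget G).

(* the subpresheaf X_x: fibre over x of X(V) -> X(0) induced by 0 -> V *)
Section Fibre.
Variables (X : presheaf) (x : X 0%N).

Definition fib_obj n := {y : X n | ps_map X (0 : 'M[K]_(0, n)) y = x}.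

Lemma fib_stable n m (f : 'M[K]_(n, m)) (y : X m) :
  ps_map X (0 : 'M[K]_(0, m)) y = x -> ps_map X (0 : 'M[K]_(0, n)) (ps_map X f y) = x.
Proof. by move=> <-; rewrite -ps_comp mul0mx. Qed.

Definition fib_map n m (f : 'M[K]_(n, m)) (y : fib_obj m) : fib_obj n :=
  exist _ (ps_map X f (sval y)) (fib_stable f (svalP y)).

Lemma fib_id n (y : fib_obj n) : fib_map 1%:M y = y.
Proof. by case: y => y hy; apply: eq_sig_hprop => [z ? ?|/=]; [apply: proof_irrelevance|rewrite ps_id]. Qed.

Lemma fib_comp n m k (f : 'M[K]_(n, m)) (g : 'M[K]_(m, k)) (y : fib_obj k) :
  fib_map (f *m g) y = fib_map f (fib_map g y).
Proof. by case: y => y hy; apply: eq_sig_hprop => [z ? ?|/=]; [apply: proof_irrelevance|rewrite ps_comp]. Qed.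

Definition fibre : presheaf := Presheaf fib_id fib_comp.
End Fibre.

End Presheaves.

(* Main.v *)
From HB Require Import structures.
Require Import Defs.
From mathcomp Require Import all_boot all_algebra.
From Stdlib Require Import ClassicalEpsilon ProofIrrelevance.
Unset Printing Implicit Defensive.
Import GRing.Theory.
Local Open Scope ring_scope.

Definition asb (P : Prop) : bool := if excluded_middle_informative P then true else false.
Lemma asbP P : reflect P (asb P).
Proof. rewrite /asb; case: excluded_middle_informative => h; constructor => //. Qed.

Section L.
Variables (R : pzRingType) (U V : lmodType R) (f : U -> V) (hf : linear f).
Definition mkLin : {linear U -> V} := HB.pack f (GRing.isLinear.Build _ _ _ _ f hf).
Lemma mkLinE u : mkLin u = f u. Proof. by []. Qed.
End L.
Arguments mkLin {R U V f} hf.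

Section Main.
Variable q : nat.
Local Notation K := 'F_q.

Lemma m00 : (0 : 'M[K]_(0,0)) = 1%:M.
Proof. by rewrite [1%:M]flatmx0. Qed.

Lemma vf0 (G : vfunctor q) (u : vf_obj G 0) : vf_map G (0 : 'M[K]_(0,0)) u = u.
Proof. by rewrite m00 vf_id. Qed.

Lemma ps0 (X : presheaf q) (u : X 0%N) : @ps_map _ X _ _ (0 : 'M[K]_(0,0)) u = u.
Proof. by rewrite m00 ps_id. Qed.

Section VM.
Variables (G : vfunctor q) (n m : nat) (f : 'M[K]_(n, m)).
Lemma vmD u v : vf_map G f (u + v) = vf_map G f u + vf_map G f v. Proof. exact: raddfD. Qed.
Lemma vmB u v : vf_map G f (u - v) = vf_map G f u - vf_map G f v. Proof. exact: raddfB. Qed.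
Lemma vmZ c u : vf_map G f (c *: u) = c *: vf_map G f u. Proof. exact: linearZ. Qed.
Lemma vm0 : vf_map G f 0 = 0. Proof. exact: raddf0. Qed.
End VM.

Section Sub.
Variables (G : vfunctor q) (S : forall n, vf_obj G n -> Prop).
Definition Qs n : vf_obj G n -> bool := fun u => asb (is_subfunctor S -> S n u).
Lemma Qs_closed n : subsemimod_closed (Qs n).
Proof.
case: (excluded_middle_informative (is_subfunctor S)) => [hS|hn].
  case: (hS) => h0 hD hZ _.
  split; [split; [|move=> u v]|move=> c u]; rewrite !unfold_in /Qs.
  - by apply/asbP.
  - by move=> /asbP hu /asbP hv; apply/asbP => hc; apply: hD; [apply: hu|apply: hv].
  - by move=> /asbP hu; apply/asbP=> hc; apply: hZ; apply: hu.
split; [split; [|move=> u v]|move=> c u]; rewrite !unfold_in => *; by apply/asbP.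
Qed.
HB.instance Definition _ n := GRing.isSubmodClosed.Build K (vf_obj G n) (Qs n) (Qs_closed n).
Definition subT n := {u : vf_obj G n | Qs n u}.
HB.instance Definition _ n := [isSub of subT n for @sval _ _].
HB.instance Definition _ n := [Choice of subT n by <:].
HB.instance Definition _ n := [SubChoice_isSubLmodule of subT n by <:].

Lemma Qs_map n m (f : 'M[K]_(n, m)) (u : subT m) : Qs n (vf_map G f (val u)).
Proof.
apply/asbP => hS; case: (hS) => _ _ _ hM; apply: hM.
by move/asbP: (valP u); apply.
Qed.

Definition submap0 {n m} (f : 'M[K]_(n, m)) (u : subT m) : subT n :=
  Sub (vf_map G f (val u)) (Qs_map n m f u).

Lemma submap0_lin (n m : nat) (f : 'M[K]_(n, m)) : linear (submap0 f).
Proof.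
move=> c u v; apply: val_inj; rewrite /submap0 /=.
by rewrite linearP.
Qed.

Definition submap {n m} (f : 'M[K]_(n, m)) : {linear subT m -> subT n} :=
  mkLin (submap0_lin n m f).

Lemma submap_id n (x : subT n) : submap 1%:M x = x.
Proof. by apply: val_inj; rewrite /= vf_id. Qed.
Lemma submap_comp n m k (f : 'M[K]_(n, m)) (g : 'M[K]_(m, k)) (x : subT k) :
  submap (f *m g) x = submap f (submap g x).
Proof. by apply: val_inj; rewrite /= vf_comp. Qed.

Definition subvf : vfunctor q := @VFunctor q subT (@submap) submap_id submap_comp.
End Sub.

Lemma valS (G : vfunctor q) S (hS : is_subfunctor S) n (w : subT G S n) : S n (val w).
Proof. by move/asbP: (valP w); apply. Qed.

Definition wstep (G : vfunctor q) (A B : forall n, vf_obj G n -> Prop) :=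
  sub_le A B /\ forall T, is_subfunctor T -> sub_le A T -> sub_le T B -> sub_le T A \/ sub_le B T.
Arguments wstep {G} A B.

Lemma wchain (G : vfunctor q) k : forall (S : nat -> forall n, vf_obj G n -> Prop),
  (forall i, (i <= k)%N -> is_subfunctor (S i)) -> (forall n u, S 0%N n u <-> u = 0) ->
  (forall i, (i < k)%N -> wstep (S i) (S i.+1)) ->
  exists k' (S' : nat -> forall n, vf_obj G n -> Prop),
    [/\ (forall i, (i <= k')%N -> is_subfunctor (S' i)), (forall n u, S' 0%N n u <-> u = 0),
        (forall n u, S' k' n u <-> S k n u) &
        (forall i, (i < k')%N -> [/\ sub_le (S' i) (S' i.+1), ~ sub_le (S' i.+1) (S' i) &
           forall T, is_subfunctor T -> sub_le (S' i) T -> sub_le T (S' i.+1) ->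
             sub_le T (S' i) \/ sub_le (S' i.+1) T])].
Proof.
elim: k => [|k IH] S hsub h0 hst.
  by exists 0%N, S; split => // i.
have [k' [S' [h1 h2 h3 h4]]] :=
  IH S (fun i hi => hsub i (leqW hi)) h0 (fun i hi => hst i (ltnW hi)).
have [stA stB] := hst k (ltnSn k).
case: (classic (sub_le (S k.+1) (S k))) => hle.
  exists k', S'; split => // n u; rewrite h3; split; [apply: stA | apply: hle].
exists k'.+1, (fun i => if (i <= k')%N then S' i else S k.+1); split.
- by move=> i hi /=; case: ifP => hik; [apply: h1 | apply: hsub].
- by move=> n u /=; exact: h2.
- by move=> n u; rewrite ltnn.
move=> i hi; rewrite ltnS leq_eqVlt in hi; case/orP: hi => [/eqP->|hi].
  rewrite leqnn ltnn; split.
  - by move=> n u /h3 /stA.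
  - by move=> H; apply: hle => n u /H /h3.
  move=> T hT hA hB.
  have hA' : sub_le (S k) T by move=> n u /h3 /hA.
  case: (stB T hT hA' hB) => [hC|hC]; [left => n u /hC /h3 | right] => //.
by rewrite (ltnW hi) hi; apply: h4.
Qed.

Lemma wseries_finite (G : vfunctor q) k (S : nat -> forall n, vf_obj G n -> Prop) :
  (forall i, (i <= k)%N -> is_subfunctor (S i)) -> (forall n u, S 0%N n u <-> u = 0) ->
  (forall n u, S k n u) -> (forall i, (i < k)%N -> wstep (S i) (S i.+1)) ->
  finite_functor G.
Proof.
move=> h1 h2 h3 h4; have [k' [S' [a b c d]]] := @wchain G k S h1 h2 h4.
by exists k', S'; split => // n u; apply/c; apply: h3.
Qed.

Lemma sub_finite (G : vfunctor q) S : is_subfunctor S -> finite_functor G ->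
  finite_functor (subvf G S).
Proof.
move=> hS [k [T [h1 h2 h3 h4]]].
apply: (@wseries_finite (subvf G S) k (fun i n (w : vf_obj (subvf G S) n) => T i n (val w))).
- move=> i hi; case: (h1 i hi) => a b c d; split.
  + by move=> n /=; apply: a.
  + by move=> n u v hu hv /=; apply: b.
  + by move=> n c' u hu /=; apply: c.
  + by move=> n m f u hu /=; apply: d.
- move=> n u /=; split => [/h2 h|->]; last by apply/h2.
  by apply: val_inj; exact: h.
- by move=> n u; apply: h3.
move=> i hi; have [sA sN sT] := h4 i hi; split; first by move=> n u /sA.
move=> Tt hT hA hB.
pose U n (u : vf_obj G n) := exists w s, Tt n w /\ T i n s /\ u = val w + s.
have [Ti0 TiD TiZ TiM] := h1 i (ltnW hi).
have [Tj0 TjD TjZ TjM] := h1 i.+1 hi.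
have [Tt0 TtD TtZ TtM] := hT.
have hU : is_subfunctor U.
  split.
  - by move=> n; exists 0, 0; split; [apply: Tt0|split; [apply: Ti0|rewrite GRing.val0 addr0]].
  - move=> n u v [w [s [hw [hs ->]]]] [w' [s' [hw' [hs' ->]]]].
    exists (w + w'), (s + s'); split; first by apply: TtD.
    by split; [apply: TiD | rewrite GRing.valD addrACA].
  - move=> n c u [w [s [hw [hs ->]]]].
    exists (c *: w), (c *: s); split; first by apply: TtZ.
    by split; [apply: TiZ | rewrite GRing.valZ scalerDr].
  - move=> n m f u [w [s [hw [hs ->]]]].
    exists (vf_map (subvf G S) f w), (vf_map G f s); split; first by apply: TtM.
    by split; [apply: TiM | rewrite raddfD].
have hAU : sub_le (T i) U.
  by move=> n u hu; exists 0, u; split; [apply: Tt0 | split; [|rewrite GRing.val0 add0r]].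
have hUB : sub_le U (T i.+1).
  move=> n u [w [s [hw [hs ->]]]]; apply: TjD; first by apply: hB.
  by apply: sA.
case: (sT U hU hAU hUB) => [hC|hC]; [left|right].
  move=> n w hw /=; apply: hC; exists w, 0; split => //; split; [apply: Ti0|by rewrite addr0].
move=> n w' hw'; have [w [s [hw [hs he]]]] := hC n (val w') hw'.
have hsS : Qs G S n s.
  apply/asbP => _; have -> : s = val w' - val w by rewrite he addrC addKr.
  have [S0 SD SZ SM] := hS.
  by apply: SD; [apply: valS | rewrite -scaleN1r; apply: SZ; apply: valS].
pose s' : subT G S n := Sub s hsS.
have -> : w' = w + s' by apply: val_inj; rewrite GRing.valD /= he.
by apply: TtD => //; apply: hA.
Qed.

Lemma cover0 (G : vfunctor q) : finite_functor G ->
  exists (T : finType) (e : T -> vf_obj G 0%N), forall u, exists t, e t = u.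
Proof.
case=> k [S [h1 h2 h3 h4]].
suff: forall i, (i <= k)%N -> exists (T : finType) (e : T -> vf_obj G 0%N),
    forall u, S i 0%N u -> exists t, e t = u.
  by case/(_ k (leqnn k)) => T [e he]; exists T, e => u; exact: he _ (h3 _ u).
elim=> [|i IH] hi.
  by exists unit, (fun _ => 0) => u /h2 ->; exists tt.
have [T [e he]] := IH (ltnW hi).
have [sA sN sT] := h4 i hi.
case: (classic (exists b, S i.+1 0%N b /\ ~ S i 0%N b)) => [[b [hb hnb]]|hno]; last first.
  exists T, e => u hu; apply: he; apply: NNPP => hn; apply: hno; by exists u.
exists (T * K)%type, (fun tc => e tc.1 + tc.2 *: b).
pose U n (u : vf_obj G n) := S i.+1 n u /\
  exists a (c : K), S i 0%N a /\ vf_map G (0 : 'M[K]_(0,n)) u = a + c *: b.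
have [Ti0 TiD TiZ TiM] := h1 i (ltnW hi).
have [Tj0 TjD TjZ TjM] := h1 i.+1 hi.
have hU : is_subfunctor U.
  split.
  - move=> n; split; first exact: Tj0.
    by exists 0, 0; split; [exact: Ti0 | rewrite vm0 scale0r addr0].
  - move=> n u v [hu [a [c [ha hua]]]] [hv [a' [c' [ha' hva]]]]; split; first exact: TjD.
    exists (a + a'), (c + c'); split; first exact: TiD.
    by rewrite vmD hua hva scalerDl addrACA.
  - move=> n c u [hu [a [c0 [ha hua]]]]; split; first exact: TjZ.
    exists (c *: a), (c * c0); split; first exact: TiZ.
    by rewrite vmZ hua scalerDr scalerA.
  - move=> n m f u [hu [a [c [ha hua]]]]; split; first exact: TjM.
    by exists a, c; split => //; rewrite -vf_comp mul0mx.
have hAU : sub_le (S i) U.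
  move=> n u hu; split; first exact: sA.
  by exists (vf_map G (0 : 'M[K]_(0,n)) u), 0; split; [exact: TiM | rewrite scale0r addr0].
have hUB : sub_le U (S i.+1) by move=> n u [].
case: (sT U hU hAU hUB) => [hC|hC].
  exfalso; apply: hnb; apply: hC; split => //; exists 0, 1.
  by split; [exact: Ti0 | rewrite vf0 scale1r add0r].
move=> u /hC [_ [a [c [ha]]]]; rewrite vf0 => ->.
by have [t <-] := he a ha; exists (t, c).
Qed.

Lemma forward (X : presheaf q) : finite_presheaf X ->
  (exists (N : nat) (e : 'I_N -> X 0%N), forall y : X 0%N, exists i, e i = y) /\
  (forall x : X 0%N, exists G : vfunctor q,
      [/\ constant_free G, finite_functor G & is_mono (fibre x) (forget G)]).
Proof.
case=> F [hF [a [ha hinj]]].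
have ha' : forall n m (f : 'M[K]_(n, m)) y,
    vf_map F f (a m y) = a n (@ps_map _ X _ _ f y) by move=> *; rewrite ha.
split.
  have [T [e he]] := @cover0 F hF.
  case: (classic (exists x0 : X 0%N, True)) => [[x0 _]|hne]; last first.
    have f : 'I_0 -> X 0%N by case=> m; rewrite ltn0.
    by exists 0%N, f => y; exfalso; apply: hne; exists y.
  pose g (t : T) : X 0%N :=
    match excluded_middle_informative (exists y, a 0%N y = e t) with
    | left h => proj1_sig (constructive_indefinite_description _ h)
    | right _ => x0 end.
  exists #|T|, (fun i => g (enum_val i)) => y.
  have [t ht] := he (a 0%N y).
  exists (enum_rank t); rewrite enum_rankK /g.
  case: excluded_middle_informative => [h|h]; last by exfalso; apply: h; exists y.
  case: (constructive_indefinite_description _ h) => y' /= hy'.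
  by apply: (hinj 0%N); rewrite hy'.
move=> x.
pose Z n (u : vf_obj F n) := vf_map F (0 : 'M[K]_(0,n)) u = 0.
have hZ : is_subfunctor Z.
  split.
  - by move=> n; rewrite /Z vm0.
  - by move=> n u v; rewrite /Z vmD => -> ->; rewrite addr0.
  - by move=> n c u; rewrite /Z vmZ => ->; rewrite scaler0.
  - by move=> n m f u; rewrite /Z -vf_comp mul0mx.
exists (subvf F Z); split.
- move=> u; apply: val_inj => /=; have := @valS F Z hZ 0%N u; rewrite /Z vf0 => ->; done.
- exact: (@sub_finite F Z hZ hF).
have hb : forall n (y : fib_obj x n),
    Qs F Z n (a n (proj1_sig y) - vf_map F (0 : 'M[K]_(n,0)) (a 0%N x)).
  move=> n [y hy]; apply/asbP => _; rewrite /Z /= vmB -vf_comp mul0mx vf0 ha' hy.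
  by rewrite subrr.
exists (fun n y => (Sub _ (hb n y) : subT F Z n)); split.
  move=> n m f [y hy]; apply: val_inj => /=.
  by rewrite vmB -vf_comp mulmx0 (ha' n m f y).
move=> n [y1 h1] [y2 h2] /(congr1 val) /= /addIr /hinj e.
by subst; congr exist; apply: proof_irrelevance.
Qed.

Lemma id_lin (V : lmodType K) : linear (fun u : V => u). Proof. by []. Qed.
Definition idL (V : lmodType K) : {linear V -> V} := mkLin (id_lin V).

Definition zerovf : vfunctor q :=
  @VFunctor q (fun _ => 'rV[K]_0) (fun n m f => idL _) (fun _ _ => erefl) (fun _ _ _ _ _ _ => erefl).

Lemma zero_finite : finite_functor zerovf.
Proof.
apply: (@wseries_finite zerovf 0 (fun i n u => u = 0)) => //.
- move=> i _; split => //.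
  + by move=> n u v -> ->; rewrite addr0.
  + by move=> n c u ->; rewrite scaler0.
- by move=> n u; apply: thinmx0.
Qed.

Definition constK : vfunctor q :=
  @VFunctor q (fun _ => K^o) (fun n m f => idL _) (fun _ _ => erefl) (fun _ _ _ _ _ _ => erefl).

Lemma constK_finite : finite_functor constK.
Proof.
apply: (@wseries_finite constK 1 (fun i n u => if i == 0%N then u = 0 else True)) => //.
- case=> [|i] _; split => //=.
  + by move=> n u v -> ->; rewrite addr0.
  + by move=> n c u ->; rewrite scaler0.
- case=> // _; split => //= T hT hA hB.
  case: (classic (exists n (u : vf_obj constK n), T n u /\ u <> 0)) => [[n [u [hu hu0]]]|hno].
    right => m v _; have [_ _ TZ TM] := hT.
    have hm : T m u := TM m n 0 u hu.
    have := TZ m (v / u) u hm.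
    suff -> : (v / u) *: (u : vf_obj constK m) = v by [].
    by rewrite /GRing.scale /= divfK //; apply/eqP.
  left => n u hu /=; apply: NNPP => hn; apply: hno; by exists n, u.
Qed.

Section Prod.
Variables (G1 G2 : vfunctor q).
Definition pobj n := (vf_obj G1 n * vf_obj G2 n)%type.
Definition pmap0 n m (f : 'M[K]_(n, m)) (w : pobj m) : pobj n :=
  (vf_map G1 f w.1, vf_map G2 f w.2).
Lemma pmap0_lin n m f : linear (pmap0 n m f).
Proof. by move=> c [u1 u2] [v1 v2]; rewrite /pmap0 /= !vmD !vmZ. Qed.
Definition pmap {n m} (f : 'M[K]_(n, m)) : {linear pobj m -> pobj n} := mkLin (pmap0_lin n m f).
Lemma pmap_id n (w : pobj n) : pmap 1%:M w = w.
Proof. by case: w => u v; rewrite /= /pmap0 /= !vf_id. Qed.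
Lemma pmap_comp n m k (f : 'M[K]_(n, m)) (g : 'M[K]_(m, k)) (w : pobj k) :
  pmap (f *m g) w = pmap f (pmap g w).
Proof. by case: w => u v; rewrite /= /pmap0 /= !vf_comp. Qed.
Definition prodvf : vfunctor q := @VFunctor q pobj (@pmap) pmap_id pmap_comp.
End Prod.

Lemma wstep_ext (G : vfunctor q) (A A' B B' : forall n, vf_obj G n -> Prop) :
  (forall n u, A n u <-> A' n u) -> (forall n u, B n u <-> B' n u) ->
  wstep A' B' -> wstep A B.
Proof.
move=> eA eB [s1 s2]; split; first by move=> n u /eA /s1 /eB.
move=> T hT hA hB.
have hA' : sub_le A' T by move=> n u /eA /hA.
have hB' : sub_le T B' by move=> n u /hB /eB.
case: (s2 T hT hA' hB') => h; [left|right] => n u.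
  by move/h/eA.
by move/eB/h.
Qed.

Lemma pairD (U V : lmodType K) (a b : (U * V)%type) : a + b = (a.1 + b.1, a.2 + b.2).
Proof. by []. Qed.
Lemma pairZ (U V : lmodType K) c (a : (U * V)%type) : c *: a = (c *: a.1, c *: a.2).
Proof. by []. Qed.

Definition sstep (G : vfunctor q) (A B : forall n, vf_obj G n -> Prop) :=
  sub_le A B /\ forall T, is_subfunctor T -> sub_le A T -> sub_le T B -> sub_le T A \/ sub_le B T.
Arguments sstep {G} A B.

Lemma step_left (G1 G2 : vfunctor q) (A B : forall n, vf_obj G1 n -> Prop) :
  is_subfunctor A -> sstep A B ->
  @wstep (prodvf G1 G2) (fun n w => A n w.1 /\ w.2 = 0) (fun n w => B n w.1 /\ w.2 = 0).
Proof.
move=> hAs [sA sT]; split; first by move=> n [u v] [hu hv]; split => //; apply: sA.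
move=> T hT hA hB.
have [T0 TD TZ TM] := hT.
pose T' n (u : vf_obj G1 n) := T n (u, 0).
have hT' : is_subfunctor T'.
  split.
  - by move=> n; apply: T0.
  - move=> n u v hu hv; have := TD n _ _ hu hv.
    by rewrite /T' pairD /= addr0.
  - move=> n c u hu; have := TZ n c _ hu.
    by rewrite /T' pairZ /= scaler0.
  - move=> n m f u hu; have := TM n m f _ hu.
    by rewrite /T' /= /pmap0 /= vm0.
have hA' : sub_le A T' by move=> n u hu; apply: hA.
have hB' : sub_le T' B by move=> n u /hB [].
case: (sT T' hT' hA' hB') => h; [left|right].
  by move=> n [u v] hu; have [_ /= hv] := hB n _ hu; subst v; split => //; apply: h.
by move=> n [u v] [hu /= ->]; apply: h.
Qed.

Lemma step_right (G1 G2 : vfunctor q) (A B : forall n, vf_obj G2 n -> Prop) :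
  is_subfunctor A -> sstep A B ->
  @wstep (prodvf G1 G2) (fun n w => A n w.2) (fun n w => B n w.2).
Proof.
move=> hAs [sA sT]; split; first by move=> n [u v] hu; apply: sA.
move=> T hT hA hB.
have [T0 TD TZ TM] := hT.
have [A0 _ _ _] := hAs.
have Tu : forall n u, T n (u, 0) by move=> n u; apply: hA; apply: A0.
pose T' n (v : vf_obj G2 n) := T n (0, v).
have hT' : is_subfunctor T'.
  split.
  - by move=> n; apply: T0.
  - move=> n u v hu hv; have := TD n _ _ hu hv.
    by rewrite /T' pairD /= addr0.
  - move=> n c u hu; have := TZ n c _ hu.
    by rewrite /T' pairZ /= scaler0.
  - move=> n m f u hu; have := TM n m f _ hu.
    by rewrite /T' /= /pmap0 /= vm0.
have hA' : sub_le A T' by move=> n u hu; apply: hA.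
have hB' : sub_le T' B by move=> n u /hB.
case: (sT T' hT' hA' hB') => h; [left|right].
  move=> n [u v] huv /=; apply: h; have := TD n _ _ huv (Tu n (- u)).
  by rewrite /T' pairD /= subrr addr0.
move=> n [u v] hv /=; have := TD n _ _ (Tu n u) (h n v hv).
by rewrite pairD /= addr0 add0r.
Qed.

Lemma prod_finite (G1 G2 : vfunctor q) : finite_functor G1 -> finite_functor G2 ->
  finite_functor (prodvf G1 G2).
Proof.
case=> k1 [S1 [a1 b1 c1 d1]] [k2 [S2 [a2 b2 c2 d2]]].
pose S i n (w : vf_obj (prodvf G1 G2) n) :=
  if (i <= k1)%N then S1 i n w.1 /\ w.2 = 0 else S2 (i - k1)%N n w.2.
have eR : forall i, (k1 <= i)%N -> forall n w, S i n w <-> S2 (i - k1)%N n w.2.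
  move=> i hi n [u v]; rewrite /S /=; case: ifP => h //.
  have -> : i = k1 by apply/eqP; rewrite eqn_leq h hi.
  rewrite subnn; split => [[_ ->]|/b2 ->]; first by apply/b2.
  by split => //; apply: c1.
have subR : forall j, (j <= k2)%N ->
    @is_subfunctor _ (prodvf G1 G2) (fun n w => S2 j n w.2).
  move=> j hj; have [A0 AD AZ AM] := a2 j hj; split.
  - by move=> n; apply: A0.
  - by move=> n u v hu hv; rewrite pairD; apply: AD.
  - by move=> n c u hu; rewrite pairZ; apply: AZ.
  - by move=> n m f u hu; apply: AM.
have subL : forall i, (i <= k1)%N ->
    @is_subfunctor _ (prodvf G1 G2) (fun n w => S1 i n w.1 /\ w.2 = 0).
  move=> i hi; have [A0 AD AZ AM] := a1 i hi; split.
  - by move=> n; split => //; apply: A0.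
  - move=> n u v [hu hu2] [hv hv2]; rewrite pairD /= hu2 hv2 addr0.
    by split => //; apply: AD.
  - move=> n c u [hu hu2]; rewrite pairZ /= hu2 scaler0.
    by split => //; apply: AZ.
  - move=> n m f u [hu hu2]; rewrite /= /pmap0 /= hu2 vm0.
    by split => //; apply: AM.
apply: (@wseries_finite _ (k1 + k2) S).
- move=> i hi; case: (leqP i k1) => h.
    by rewrite /S h; exact: subL.
  rewrite /S (leqNgt i k1) h /=; apply: subR.
  by rewrite leq_subLR.
- move=> n [u v]; rewrite /S /=; split => [[/b1 -> ->]|e] //.
  have := congr1 fst e; have := congr1 snd e; rewrite /= => -> ->.
  by split => //; apply/b1.
- move=> n w; apply/eR; first by rewrite leq_addr.
  by rewrite addKn; apply: c2.
move=> i hi; case: (ltnP i k1) => h.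
  apply: (@wstep_ext (prodvf G1 G2) _ (fun n (w : vf_obj (prodvf G1 G2) n) => S1 i n w.1 /\ w.2 = 0) _
                         (fun n w => S1 i.+1 n w.1 /\ w.2 = 0)).
  - by move=> n w; rewrite /S (ltnW h).
  - by move=> n w; rewrite /S h.
  apply: step_left; first exact: a1 (ltnW h).
  by case: (d1 i h) => sA _ sT; split.
have hj : (i - k1 < k2)%N by rewrite ltn_subLR.
apply: (@wstep_ext (prodvf G1 G2) _ (fun n (w : vf_obj (prodvf G1 G2) n) => S2 (i - k1)%N n w.2) _
                       (fun n (w : vf_obj (prodvf G1 G2) n) => S2 (i - k1)%N.+1 n w.2)).
- exact: eR.
- by move=> n w; rewrite -subSn //; apply: eR; exact: leqW.
apply: step_right; first exact: a2 (ltnW hj).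
by case: (d2 _ hj) => sA _ sT; split.
Qed.

Lemma rev_ind (X : presheaf q)
  (hfib : forall x : X 0%N, exists G : vfunctor q,
      [/\ constant_free G, finite_functor G & is_mono (fibre x) (forget G)])
  (s : seq (X 0%N)) :
  exists (G : vfunctor q) (a : forall n, X n -> vf_obj G n),
    [/\ finite_functor G,
        (forall n m (f : 'M[K]_(n, m)) y, a n (@ps_map _ X _ _ f y) = vf_map G f (a m y)) &
        (forall n y1 y2, List.In (@ps_map _ X _ _ (0 : 'M[K]_(0, n)) y1) s ->
                         List.In (@ps_map _ X _ _ (0 : 'M[K]_(0, n)) y2) s ->
                         a n y1 = a n y2 -> y1 = y2)].
Proof.
elim: s => [|x s [G' [a' [hG' ha' hi']]]].
  exists zerovf, (fun n _ => 0); split => //; exact: zero_finite.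
have [Gx [_ hGx [b [hb hbi]]]] := hfib x.
pose ind n (y : X n) : K^o :=
  if excluded_middle_informative (@ps_map _ X _ _ (0 : 'M[K]_(0, n)) y = x) then 1 else 0.
pose bb n (y : X n) : vf_obj Gx n :=
  match excluded_middle_informative (@ps_map _ X _ _ (0 : 'M[K]_(0, n)) y = x) with
  | left h => b n (exist _ y h)
  | right _ => 0 end.
exists (prodvf G' (prodvf Gx constK)), (fun n y => (a' n y, (bb n y, ind n y))).
split.
- apply: prod_finite => //; apply: prod_finite => //; exact: constK_finite.
- move=> n m f y /=; rewrite /pmap0 /= ha'; congr pair.
  have e : @ps_map _ X _ _ (0 : 'M[K]_(0, n)) (@ps_map _ X _ _ f y) =
           @ps_map _ X _ _ (0 : 'M[K]_(0, m)) y by rewrite -ps_comp mul0mx.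
  rewrite /bb /ind; case: excluded_middle_informative => h1;
    case: excluded_middle_informative => h2.
  + congr pair; rewrite -[RHS]/(@ps_map _ (forget Gx) _ _ f (b m (exist _ y h2))) -hb.
    by congr (b n _); apply: eq_sig_hprop => [z ? ?|//]; apply: proof_irrelevance.
  + by exfalso; apply: h2; rewrite -e.
  + by exfalso; apply: h1; rewrite e.
  + by rewrite /pmap0 /= vm0.
move=> n y1 y2 hy1 hy2 /= [e1 e2 e3].
move: e2 e3; rewrite /bb /ind.
case: excluded_middle_informative => h1; case: excluded_middle_informative => h2.
- by move=> /hbi /(congr1 (@proj1_sig _ _)).
- by move=> _ /eqP; rewrite oner_eq0.
- by move=> _ /esym /eqP; rewrite oner_eq0.
move=> _ _; apply: (hi' n) => //.
  by case: hy1 => // e; exfalso; apply: h1.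
by case: hy2 => // e; exfalso; apply: h2.
Qed.

End Main.

Lemma in_enum_map (T : Type) N (e : 'I_N -> T) i : List.In (e i) (map e (enum 'I_N)).
Proof.
have : i \in enum 'I_N by rewrite mem_enum.
elim: (enum 'I_N) => //= j l IH; rewrite inE => /orP [/eqP->|h]; [by left|right; exact: IH].
Qed.

Theorem lemma3p2 (p : nat) (hp : prime p) (X : presheaf p) :
  finite_presheaf X <->
  (exists (N : nat) (e : 'I_N -> X 0%N), forall y : X 0%N, exists i, e i = y) /\
  (forall x : X 0%N, exists G : vfunctor p,
      [/\ constant_free G, finite_functor G & is_mono (fibre x) (forget G)]).
Proof.
split; first exact: forward.
move=> [[N [e he]] hfib].
have [G [a [hG ha hi]]] := @rev_ind p X hfib (map e (enum 'I_N)).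
exists G; split => //; exists a; split; first by move=> n m f y; rewrite ha.
move=> n y1 y2; apply: hi.
  by have [i <-] := he (@ps_map _ X _ _ (0 : 'M_(0, n)) y1); apply: in_enum_map.
by have [i <-] := he (@ps_map _ X _ _ (0 : 'M_(0, n)) y2); apply: in_enum_map.
Qed.
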